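(* Any set of reflections of $G_7$ containing at least one element of each of $R'=R_1\cup R_1^{-1}$, $R''=R_2\cup R_2^{-1}$ and $S$ generates the entire group $G_7$.
   Context: Let $G_7$ be the subgroup of $GL_2(\mathbb{C})$ generated by $s=\begin{bmatrix}1&0\\0&-1\end{bmatrix}$, $t=\frac14\begin{bmatrix}(1+\sqrt3)+(-1+\sqrt3)i & (1+\sqrt3)+(-1+\sqrt3)i\\ (-1+\sqrt3)-(1+\sqrt3)i & (1-\sqrt3)+(1+\sqrt3)i\end{bmatrix}$ and $u=t^{\top}$ (presentation $\langle s,t,u\mid s^2=t^3=u^3=1,\ stu=ust=tus\rangle$, order $144$). A reflection is a linear map of $\mathbb{C}^2$ whose fixed space has dimension $1$. $G_7$ has $22$ reflections in five conjugacy classes: $S$ (class of $s$, six reflections of order $2$), $R_1$ (class of $t$), $R_2$ (class of $u$), $R_1^{-1}=\{r^{-1}:r\in R_1\}$ and $R_2^{-1}=\{r^{-1}:r\in R_2\}$, the last four each consisting of four reflections of order $3$. *)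

(* Defs.v *)
From HB Require Import structures.
From mathcomp Require Import all_boot all_order all_algebra all_field.
Set Implicit Arguments. Unset Strict Implicit. Unset Printing Implicit Defensive.
Import Order.TTheory GRing.Theory Num.Theory.
Local Open Scope ring_scope.

Notation M2 := 'M[algC]_2.

Definition mx2 (a b c d : algC) : M2 :=
  \matrix_(i < 2, j < 2)
    if (i : nat) == 0%N then (if (j : nat) == 0%N then a else b)
    else (if (j : nat) == 0%N then c else d).

Definition r3 : algC := sqrtC 3.

Definition s7 : M2 := mx2 1 0 0 (-1).
Definition t7 : M2 :=
  (4%:R)^-1 *: mx2 ((1 + r3) + (-1 + r3) * 'i) ((1 + r3) + (-1 + r3) * 'i)
                   ((-1 + r3) - (1 + r3) * 'i) ((1 - r3) + (1 + r3) * 'i).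
Definition u7 : M2 := t7^T.

Inductive gen (A : M2 -> Prop) : M2 -> Prop :=
  | gen1 : gen A 1
  | gen_in x : A x -> gen A x
  | genM x y : gen A x -> gen A y -> gen A (x * y)
  | genV x : gen A x -> gen A x^-1.

Definition G7 : M2 -> Prop := gen (fun x => x = s7 \/ x = t7 \/ x = u7).

Definition is_reflection (g : M2) : Prop := \rank (kermx (g - 1)) = 1%N.

Definition cls7 (x : M2) (g : M2) : Prop :=
  exists2 h, G7 h & g = h^-1 * x * h.

Definition S7 := cls7 s7.
Definition R1 := cls7 t7.
Definition R2 := cls7 u7.
Definition inv_set (A : M2 -> Prop) (g : M2) : Prop := A g^-1.

(* Main.v *)
Require Import Defs.
From HB Require Import structures.
From mathcomp Require Import all_boot all_order all_algebra all_field.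
From mathcomp Require Import ring.
Import Order.TTheory GRing.Theory Num.Theory.
Local Open Scope ring_scope.

Definition Q3 := (rat * rat)%type.
Definition K := (Q3 * Q3)%type.
Definition Mat := ((K * K) * (K * K))%type.

Definition a3 (x y : Q3) : Q3 := (x.1 + y.1, x.2 + y.2).
Definition s3 (x y : Q3) : Q3 := (x.1 - y.1, x.2 - y.2).
Definition m3 (x y : Q3) : Q3 := (x.1 * y.1 + 3%:R * (x.2 * y.2), x.1 * y.2 + x.2 * y.1).
Definition aK (x y : K) : K := (a3 x.1 y.1, a3 x.2 y.2).
Definition mK (x y : K) : K := (s3 (m3 x.1 y.1) (m3 x.2 y.2), a3 (m3 x.1 y.2) (m3 x.2 y.1)).
Definition mmul (A B : Mat) : Mat :=
  ((aK (mK A.1.1 B.1.1) (mK A.1.2 B.2.1), aK (mK A.1.1 B.1.2) (mK A.1.2 B.2.2)),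
   (aK (mK A.2.1 B.1.1) (mK A.2.2 B.2.1), aK (mK A.2.1 B.1.2) (mK A.2.2 B.2.2))).

Definition qf (n : int) : rat := n%:~R / 4%:R.
Definition kk (a b c d : int) : K := ((qf a, qf b), (qf c, qf d)).
Definition mm4 (x y z w : K) : Mat := ((x, y), (z, w)).

Definition I' : Mat := mm4 (kk 4 0 0 0) (kk 0 0 0 0) (kk 0 0 0 0) (kk 4 0 0 0).
Definition s' : Mat := mm4 (kk 4 0 0 0) (kk 0 0 0 0) (kk 0 0 0 0) (kk (-4) 0 0 0).
Definition t' : Mat := mm4 (kk 1 1 (-1) 1) (kk 1 1 (-1) 1) (kk (-1) 1 (-1) (-1)) (kk 1 (-1) 1 1).
Definition u' : Mat := mm4 (kk 1 1 (-1) 1) (kk (-1) 1 (-1) (-1)) (kk 1 1 (-1) 1) (kk 1 (-1) 1 1).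

Definition mpow (n : nat) (x : Mat) : Mat := iter n (fun y => mmul y x) I'.

Definition evalw (a b c : Mat) (w : seq nat) : Mat :=
  foldl (fun acc k => mmul acc (nth a [:: a; b; c] k)) I' w.

Definition e3 (x : Q3) : algC := ratr x.1 + ratr x.2 * r3.
Definition eK (x : K) : algC := e3 x.1 + e3 x.2 * 'i.
Definition eM (A : Mat) : M2 := mx2 (eK A.1.1) (eK A.1.2) (eK A.2.1) (eK A.2.2).

Lemma r3sq : r3 * r3 = 3%:R.
Proof. by rewrite /r3 -expr2 sqrtCK. Qed.
Lemma isq : 'i * 'i = - 1 :> algC.
Proof. by rewrite -expr2 sqrCi. Qed.

Lemma e3A x y : e3 (a3 x y) = e3 x + e3 y.
Proof. rewrite /e3 /= !rmorphD /=; ring. Qed.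
Lemma e3B x y : e3 (s3 x y) = e3 x - e3 y.
Proof. rewrite /e3 /= !rmorphB /=; ring. Qed.
Lemma e3M x y : e3 (m3 x y) = e3 x * e3 y.
Proof.
rewrite /e3 /= !rmorphD !rmorphM /= rmorph_nat.
have -> : (ratr x.1 + ratr x.2 * r3) * (ratr y.1 + ratr y.2 * r3) =
  ratr x.1 * ratr y.1 + (r3 * r3) * (ratr x.2 * ratr y.2) + (ratr x.1 * ratr y.2 + ratr x.2 * ratr y.1) * r3 :> algC by ring.
by rewrite r3sq.
Qed.
Lemma eKA x y : eK (aK x y) = eK x + eK y.
Proof. rewrite /eK /= !e3A; ring. Qed.
Lemma eKM x y : eK (mK x y) = eK x * eK y.
Proof.
rewrite /eK /= e3B e3A !e3M.
have -> : (e3 x.1 + e3 x.2 * 'i) * (e3 y.1 + e3 y.2 * 'i) =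
  e3 x.1 * e3 y.1 + ('i * 'i) * (e3 x.2 * e3 y.2) + (e3 x.1 * e3 y.2 + e3 x.2 * e3 y.1) * 'i by ring.
rewrite isq; ring.
Qed.

Lemma mx2M a b c d a' b' c' d' :
  mx2 a b c d * mx2 a' b' c' d' = mx2 (a * a' + b * c') (a * b' + b * d') (c * a' + d * c') (c * b' + d * d').
Proof.
apply/matrixP => i j; rewrite !mxE !big_ord_recl big_ord0 !mxE /=.
by case: i => [[|[|//]] ?]; case: j => [[|[|//]] ?]; rewrite /= addr0.
Qed.

Lemma eMM A B : eM (mmul A B) = eM A * eM B.
Proof. by rewrite /eM mx2M /= !eKA !eKM. Qed.

Lemma ratr_qf n : ratr (qf n) = n%:~R / 4%:R :> algC.
Proof. by rewrite /qf rmorphM fmorphV /= ratr_int rmorph_nat. Qed.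

Lemma eM1 : eM I' = 1.
Proof.
rewrite /eM /= /eK /e3 /= !ratr_qf.
apply/matrixP => i j; rewrite !mxE.
case: i => [[|[|//]] ?]; case: j => [[|[|//]] ?]; by rewrite /=; field.
Qed.

Lemma eMs : eM s' = s7.
Proof.
apply/matrixP => i j; rewrite /s7 /eM !mxE /eK /e3 /= !ratr_qf.
by case: i => [[|[|//]] ?]; case: j => [[|[|//]] ?]; rewrite /=; field.
Qed.
Lemma eMt : eM t' = t7.
Proof.
apply/matrixP => i j; rewrite /t7 /eM !mxE /eK /e3 /= !ratr_qf.
by case: i => [[|[|//]] ?]; case: j => [[|[|//]] ?]; rewrite /=; field.
Qed.
Lemma eMu : eM u' = u7.
Proof.
apply/matrixP => i j; rewrite /u7 /t7 /eM !mxE /eK /e3 /= !ratr_qf.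
by case: i => [[|[|//]] ?]; case: j => [[|[|//]] ?]; rewrite /=; field.
Qed.

Lemma eM_pow n x : eM (mpow n x) = eM x ^+ n.
Proof. elim: n => [|n IH] /=; first by rewrite eM1 expr0. by rewrite eMM IH exprSr. Qed.

Lemma inv_of (x y : M2) : x * y = 1 -> x^-1 = y.
Proof.
move=> H; have [ux _] := mulmx1_unit H.
by rewrite -[y](mulKr ux) H mulr1.
Qed.

Lemma eM_inv {x} : mpow 12 x == I' -> (eM x)^-1 = eM (mpow 11 x).
Proof.
move/eqP=> H; apply: inv_of.
by rewrite eM_pow -exprS -eM_pow H eM1.
Qed.
Definition Llit : seq Mat := [::
  (mm4 (kk 4%Z 0%Z 0%Z 0%Z) (kk 0%Z 0%Z 0%Z 0%Z) (kk 0%Z 0%Z 0%Z 0%Z) (kk 4%Z 0%Z 0%Z 0%Z));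
  (mm4 (kk 4%Z 0%Z 0%Z 0%Z) (kk 0%Z 0%Z 0%Z 0%Z) (kk 0%Z 0%Z 0%Z 0%Z) (kk (-4)%Z 0%Z 0%Z 0%Z));
  (mm4 (kk 1%Z 1%Z (-1)%Z 1%Z) (kk 1%Z 1%Z (-1)%Z 1%Z) (kk (-1)%Z 1%Z (-1)%Z (-1)%Z) (kk 1%Z (-1)%Z 1%Z 1%Z));
  (mm4 (kk 1%Z 1%Z (-1)%Z 1%Z) (kk (-1)%Z 1%Z (-1)%Z (-1)%Z) (kk 1%Z 1%Z (-1)%Z 1%Z) (kk 1%Z (-1)%Z 1%Z 1%Z));
  (mm4 (kk 1%Z 1%Z (-1)%Z 1%Z) (kk 1%Z 1%Z (-1)%Z 1%Z) (kk 1%Z (-1)%Z 1%Z 1%Z) (kk (-1)%Z 1%Z (-1)%Z (-1)%Z));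
  (mm4 (kk 1%Z 1%Z (-1)%Z 1%Z) (kk (-1)%Z 1%Z (-1)%Z (-1)%Z) (kk (-1)%Z (-1)%Z 1%Z (-1)%Z) (kk (-1)%Z 1%Z (-1)%Z (-1)%Z));
  (mm4 (kk 1%Z 1%Z (-1)%Z 1%Z) (kk (-1)%Z (-1)%Z 1%Z (-1)%Z) (kk (-1)%Z 1%Z (-1)%Z (-1)%Z) (kk (-1)%Z 1%Z (-1)%Z (-1)%Z));
  (mm4 (kk 1%Z 1%Z 1%Z (-1)%Z) (kk (-1)%Z 1%Z 1%Z 1%Z) (kk 1%Z 1%Z 1%Z (-1)%Z) (kk 1%Z (-1)%Z (-1)%Z (-1)%Z));
  (mm4 (kk 0%Z 2%Z 2%Z 0%Z) (kk 0%Z 0%Z 0%Z 0%Z) (kk 0%Z 0%Z 0%Z 0%Z) (kk 0%Z (-2)%Z (-2)%Z 0%Z));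
  (mm4 (kk 1%Z 1%Z (-1)%Z 1%Z) (kk 1%Z (-1)%Z 1%Z 1%Z) (kk 1%Z 1%Z (-1)%Z 1%Z) (kk (-1)%Z 1%Z (-1)%Z (-1)%Z));
  (mm4 (kk 0%Z 0%Z 0%Z 0%Z) (kk 0%Z 2%Z 2%Z 0%Z) (kk 0%Z 2%Z 2%Z 0%Z) (kk 0%Z 0%Z 0%Z 0%Z));
  (mm4 (kk 1%Z 1%Z 1%Z (-1)%Z) (kk 1%Z 1%Z 1%Z (-1)%Z) (kk (-1)%Z 1%Z 1%Z 1%Z) (kk 1%Z (-1)%Z (-1)%Z (-1)%Z));
  (mm4 (kk 1%Z 1%Z (-1)%Z 1%Z) (kk (-1)%Z (-1)%Z 1%Z (-1)%Z) (kk 1%Z (-1)%Z 1%Z 1%Z) (kk 1%Z (-1)%Z 1%Z 1%Z));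
  (mm4 (kk 1%Z 1%Z 1%Z (-1)%Z) (kk (-1)%Z 1%Z 1%Z 1%Z) (kk (-1)%Z (-1)%Z (-1)%Z 1%Z) (kk (-1)%Z 1%Z 1%Z 1%Z));
  (mm4 (kk 0%Z 2%Z 2%Z 0%Z) (kk 0%Z 0%Z 0%Z 0%Z) (kk 0%Z 0%Z 0%Z 0%Z) (kk 0%Z 2%Z 2%Z 0%Z));
  (mm4 (kk 1%Z 1%Z (-1)%Z 1%Z) (kk 1%Z (-1)%Z 1%Z 1%Z) (kk (-1)%Z (-1)%Z 1%Z (-1)%Z) (kk 1%Z (-1)%Z 1%Z 1%Z));
  (mm4 (kk 0%Z 0%Z 0%Z 0%Z) (kk 0%Z 2%Z 2%Z 0%Z) (kk 0%Z (-2)%Z (-2)%Z 0%Z) (kk 0%Z 0%Z 0%Z 0%Z));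
  (mm4 (kk 1%Z 1%Z 1%Z (-1)%Z) (kk 1%Z 1%Z 1%Z (-1)%Z) (kk 1%Z (-1)%Z (-1)%Z (-1)%Z) (kk (-1)%Z 1%Z 1%Z 1%Z));
  (mm4 (kk (-1)%Z 1%Z 1%Z 1%Z) (kk 1%Z 1%Z 1%Z (-1)%Z) (kk 1%Z (-1)%Z (-1)%Z (-1)%Z) (kk 1%Z 1%Z 1%Z (-1)%Z));
  (mm4 (kk 0%Z 0%Z 0%Z 0%Z) (kk 2%Z 0%Z 0%Z (-2)%Z) (kk 2%Z 0%Z 0%Z (-2)%Z) (kk 0%Z 0%Z 0%Z 0%Z));
  (mm4 (kk 1%Z 1%Z 1%Z (-1)%Z) (kk 1%Z (-1)%Z (-1)%Z (-1)%Z) (kk 1%Z 1%Z 1%Z (-1)%Z) (kk (-1)%Z 1%Z 1%Z 1%Z));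
  (mm4 (kk 2%Z 0%Z 2%Z 0%Z) (kk (-2)%Z 0%Z (-2)%Z 0%Z) (kk 2%Z 0%Z (-2)%Z 0%Z) (kk 2%Z 0%Z (-2)%Z 0%Z));
  (mm4 (kk 2%Z 0%Z 2%Z 0%Z) (kk 2%Z 0%Z 2%Z 0%Z) (kk (-2)%Z 0%Z 2%Z 0%Z) (kk 2%Z 0%Z (-2)%Z 0%Z));
  (mm4 (kk 2%Z 0%Z 2%Z 0%Z) (kk 2%Z 0%Z (-2)%Z 0%Z) (kk (-2)%Z 0%Z (-2)%Z 0%Z) (kk 2%Z 0%Z (-2)%Z 0%Z));
  (mm4 (kk (-1)%Z 1%Z 1%Z 1%Z) (kk 1%Z (-1)%Z (-1)%Z (-1)%Z) (kk 1%Z 1%Z 1%Z (-1)%Z) (kk 1%Z 1%Z 1%Z (-1)%Z));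
  (mm4 (kk 0%Z 0%Z 0%Z 0%Z) (kk 0%Z (-2)%Z (-2)%Z 0%Z) (kk 0%Z 2%Z 2%Z 0%Z) (kk 0%Z 0%Z 0%Z 0%Z));
  (mm4 (kk 2%Z 0%Z (-2)%Z 0%Z) (kk (-2)%Z 0%Z 2%Z 0%Z) (kk 2%Z 0%Z 2%Z 0%Z) (kk 2%Z 0%Z 2%Z 0%Z));
  (mm4 (kk 2%Z 0%Z 2%Z 0%Z) (kk (-2)%Z 0%Z 2%Z 0%Z) (kk 2%Z 0%Z 2%Z 0%Z) (kk 2%Z 0%Z (-2)%Z 0%Z));
  (mm4 (kk 1%Z 1%Z 1%Z (-1)%Z) (kk (-1)%Z (-1)%Z (-1)%Z 1%Z) (kk (-1)%Z 1%Z 1%Z 1%Z) (kk (-1)%Z 1%Z 1%Z 1%Z));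
  (mm4 (kk 2%Z 0%Z (-2)%Z 0%Z) (kk 2%Z 0%Z 2%Z 0%Z) (kk (-2)%Z 0%Z 2%Z 0%Z) (kk 2%Z 0%Z 2%Z 0%Z));
  (mm4 (kk (-1)%Z 1%Z 1%Z 1%Z) (kk 1%Z 1%Z 1%Z (-1)%Z) (kk (-1)%Z 1%Z 1%Z 1%Z) (kk (-1)%Z (-1)%Z (-1)%Z 1%Z));
  (mm4 (kk 0%Z 0%Z 0%Z 0%Z) (kk 2%Z 0%Z 0%Z (-2)%Z) (kk (-2)%Z 0%Z 0%Z 2%Z) (kk 0%Z 0%Z 0%Z 0%Z));
  (mm4 (kk 1%Z 1%Z 1%Z (-1)%Z) (kk 1%Z (-1)%Z (-1)%Z (-1)%Z) (kk (-1)%Z (-1)%Z (-1)%Z 1%Z) (kk 1%Z (-1)%Z (-1)%Z (-1)%Z));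
  (mm4 (kk 2%Z 0%Z 2%Z 0%Z) (kk (-2)%Z 0%Z (-2)%Z 0%Z) (kk (-2)%Z 0%Z 2%Z 0%Z) (kk (-2)%Z 0%Z 2%Z 0%Z));
  (mm4 (kk 2%Z 0%Z 2%Z 0%Z) (kk 2%Z 0%Z 2%Z 0%Z) (kk 2%Z 0%Z (-2)%Z 0%Z) (kk (-2)%Z 0%Z 2%Z 0%Z));
  (mm4 (kk 2%Z 0%Z 2%Z 0%Z) (kk 2%Z 0%Z (-2)%Z 0%Z) (kk 2%Z 0%Z 2%Z 0%Z) (kk (-2)%Z 0%Z 2%Z 0%Z));
  (mm4 (kk (-1)%Z 1%Z 1%Z 1%Z) (kk 1%Z (-1)%Z (-1)%Z (-1)%Z) (kk (-1)%Z (-1)%Z (-1)%Z 1%Z) (kk (-1)%Z (-1)%Z (-1)%Z 1%Z));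
  (mm4 (kk 0%Z 0%Z 0%Z 0%Z) (kk 0%Z (-2)%Z (-2)%Z 0%Z) (kk 0%Z (-2)%Z (-2)%Z 0%Z) (kk 0%Z 0%Z 0%Z 0%Z));
  (mm4 (kk 2%Z 0%Z (-2)%Z 0%Z) (kk (-2)%Z 0%Z 2%Z 0%Z) (kk (-2)%Z 0%Z (-2)%Z 0%Z) (kk (-2)%Z 0%Z (-2)%Z 0%Z));
  (mm4 (kk 2%Z 0%Z 2%Z 0%Z) (kk (-2)%Z 0%Z 2%Z 0%Z) (kk (-2)%Z 0%Z (-2)%Z 0%Z) (kk (-2)%Z 0%Z 2%Z 0%Z));
  (mm4 (kk 1%Z 1%Z 1%Z (-1)%Z) (kk (-1)%Z (-1)%Z (-1)%Z 1%Z) (kk 1%Z (-1)%Z (-1)%Z (-1)%Z) (kk 1%Z (-1)%Z (-1)%Z (-1)%Z));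
  (mm4 (kk 2%Z 0%Z (-2)%Z 0%Z) (kk 2%Z 0%Z 2%Z 0%Z) (kk 2%Z 0%Z (-2)%Z 0%Z) (kk (-2)%Z 0%Z (-2)%Z 0%Z));
  (mm4 (kk (-1)%Z 1%Z 1%Z 1%Z) (kk (-1)%Z (-1)%Z (-1)%Z 1%Z) (kk 1%Z (-1)%Z (-1)%Z (-1)%Z) (kk (-1)%Z (-1)%Z (-1)%Z 1%Z));
  (mm4 (kk 0%Z 0%Z 0%Z 0%Z) (kk 0%Z 0%Z 4%Z 0%Z) (kk 0%Z 0%Z (-4)%Z 0%Z) (kk 0%Z 0%Z 0%Z 0%Z));
  (mm4 (kk 0%Z 0%Z 0%Z 0%Z) (kk (-2)%Z 0%Z 0%Z 2%Z) (kk 2%Z 0%Z 0%Z (-2)%Z) (kk 0%Z 0%Z 0%Z 0%Z));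
  (mm4 (kk (-2)%Z 0%Z (-2)%Z 0%Z) (kk 2%Z 0%Z 2%Z 0%Z) (kk 2%Z 0%Z (-2)%Z 0%Z) (kk 2%Z 0%Z (-2)%Z 0%Z));
  (mm4 (kk 0%Z 0%Z 0%Z 0%Z) (kk 4%Z 0%Z 0%Z 0%Z) (kk 4%Z 0%Z 0%Z 0%Z) (kk 0%Z 0%Z 0%Z 0%Z));
  (mm4 (kk 2%Z 0%Z (-2)%Z 0%Z) (kk 2%Z 0%Z (-2)%Z 0%Z) (kk 2%Z 0%Z 2%Z 0%Z) (kk (-2)%Z 0%Z (-2)%Z 0%Z));
  (mm4 (kk 1%Z (-1)%Z 1%Z 1%Z) (kk 1%Z 1%Z (-1)%Z 1%Z) (kk (-1)%Z 1%Z (-1)%Z (-1)%Z) (kk 1%Z 1%Z (-1)%Z 1%Z));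
  (mm4 (kk 0%Z 0%Z 0%Z 0%Z) (kk 0%Z 2%Z (-2)%Z 0%Z) (kk 0%Z 2%Z (-2)%Z 0%Z) (kk 0%Z 0%Z 0%Z 0%Z));
  (mm4 (kk 2%Z 0%Z 0%Z 2%Z) (kk 0%Z 0%Z 0%Z 0%Z) (kk 0%Z 0%Z 0%Z 0%Z) (kk 2%Z 0%Z 0%Z 2%Z));
  (mm4 (kk 0%Z 0%Z 0%Z 0%Z) (kk 2%Z 0%Z 0%Z 2%Z) (kk (-2)%Z 0%Z 0%Z (-2)%Z) (kk 0%Z 0%Z 0%Z 0%Z));
  (mm4 (kk (-1)%Z 1%Z 1%Z 1%Z) (kk (-1)%Z 1%Z 1%Z 1%Z) (kk 1%Z 1%Z 1%Z (-1)%Z) (kk (-1)%Z (-1)%Z (-1)%Z 1%Z));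
  (mm4 (kk (-2)%Z 0%Z 2%Z 0%Z) (kk 2%Z 0%Z 2%Z 0%Z) (kk 2%Z 0%Z (-2)%Z 0%Z) (kk 2%Z 0%Z 2%Z 0%Z));
  (mm4 (kk (-2)%Z 0%Z 2%Z 0%Z) (kk 2%Z 0%Z (-2)%Z 0%Z) (kk 2%Z 0%Z 2%Z 0%Z) (kk 2%Z 0%Z 2%Z 0%Z));
  (mm4 (kk (-2)%Z 0%Z (-2)%Z 0%Z) (kk 2%Z 0%Z (-2)%Z 0%Z) (kk 2%Z 0%Z 2%Z 0%Z) (kk 2%Z 0%Z (-2)%Z 0%Z));
  (mm4 (kk 0%Z 0%Z 0%Z 0%Z) (kk (-2)%Z 0%Z 0%Z (-2)%Z) (kk 2%Z 0%Z 0%Z 2%Z) (kk 0%Z 0%Z 0%Z 0%Z));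
  (mm4 (kk 1%Z (-1)%Z 1%Z 1%Z) (kk (-1)%Z 1%Z (-1)%Z (-1)%Z) (kk 1%Z 1%Z (-1)%Z 1%Z) (kk 1%Z 1%Z (-1)%Z 1%Z));
  (mm4 (kk 0%Z 0%Z 0%Z 0%Z) (kk 0%Z 0%Z (-4)%Z 0%Z) (kk 0%Z 0%Z 4%Z 0%Z) (kk 0%Z 0%Z 0%Z 0%Z));
  (mm4 (kk 2%Z 0%Z (-2)%Z 0%Z) (kk (-2)%Z 0%Z (-2)%Z 0%Z) (kk (-2)%Z 0%Z 2%Z 0%Z) (kk (-2)%Z 0%Z (-2)%Z 0%Z));
  (mm4 (kk 0%Z 2%Z (-2)%Z 0%Z) (kk 0%Z 0%Z 0%Z 0%Z) (kk 0%Z 0%Z 0%Z 0%Z) (kk 0%Z (-2)%Z 2%Z 0%Z));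
  (mm4 (kk (-1)%Z 1%Z 1%Z 1%Z) (kk (-1)%Z (-1)%Z (-1)%Z 1%Z) (kk (-1)%Z 1%Z 1%Z 1%Z) (kk 1%Z 1%Z 1%Z (-1)%Z));
  (mm4 (kk 0%Z 0%Z 0%Z 0%Z) (kk 0%Z 0%Z 4%Z 0%Z) (kk 0%Z 0%Z 4%Z 0%Z) (kk 0%Z 0%Z 0%Z 0%Z));
  (mm4 (kk 0%Z 0%Z 0%Z 0%Z) (kk (-2)%Z 0%Z 0%Z 2%Z) (kk (-2)%Z 0%Z 0%Z 2%Z) (kk 0%Z 0%Z 0%Z 0%Z));
  (mm4 (kk (-2)%Z 0%Z (-2)%Z 0%Z) (kk 2%Z 0%Z 2%Z 0%Z) (kk (-2)%Z 0%Z 2%Z 0%Z) (kk (-2)%Z 0%Z 2%Z 0%Z));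
  (mm4 (kk 0%Z 0%Z 0%Z 0%Z) (kk 4%Z 0%Z 0%Z 0%Z) (kk (-4)%Z 0%Z 0%Z 0%Z) (kk 0%Z 0%Z 0%Z 0%Z));
  (mm4 (kk 2%Z 0%Z (-2)%Z 0%Z) (kk 2%Z 0%Z (-2)%Z 0%Z) (kk (-2)%Z 0%Z (-2)%Z 0%Z) (kk 2%Z 0%Z 2%Z 0%Z));
  (mm4 (kk 1%Z (-1)%Z 1%Z 1%Z) (kk 1%Z 1%Z (-1)%Z 1%Z) (kk 1%Z (-1)%Z 1%Z 1%Z) (kk (-1)%Z (-1)%Z 1%Z (-1)%Z));
  (mm4 (kk 0%Z 0%Z 0%Z 0%Z) (kk 0%Z 2%Z (-2)%Z 0%Z) (kk 0%Z (-2)%Z 2%Z 0%Z) (kk 0%Z 0%Z 0%Z 0%Z));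
  (mm4 (kk 2%Z 0%Z 0%Z 2%Z) (kk 0%Z 0%Z 0%Z 0%Z) (kk 0%Z 0%Z 0%Z 0%Z) (kk (-2)%Z 0%Z 0%Z (-2)%Z));
  (mm4 (kk 0%Z 0%Z 0%Z 0%Z) (kk 2%Z 0%Z 0%Z 2%Z) (kk 2%Z 0%Z 0%Z 2%Z) (kk 0%Z 0%Z 0%Z 0%Z));
  (mm4 (kk (-1)%Z 1%Z 1%Z 1%Z) (kk (-1)%Z 1%Z 1%Z 1%Z) (kk (-1)%Z (-1)%Z (-1)%Z 1%Z) (kk 1%Z 1%Z 1%Z (-1)%Z));
  (mm4 (kk (-2)%Z 0%Z 2%Z 0%Z) (kk 2%Z 0%Z 2%Z 0%Z) (kk (-2)%Z 0%Z 2%Z 0%Z) (kk (-2)%Z 0%Z (-2)%Z 0%Z));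
  (mm4 (kk (-2)%Z 0%Z 2%Z 0%Z) (kk 2%Z 0%Z (-2)%Z 0%Z) (kk (-2)%Z 0%Z (-2)%Z 0%Z) (kk (-2)%Z 0%Z (-2)%Z 0%Z));
  (mm4 (kk (-2)%Z 0%Z (-2)%Z 0%Z) (kk 2%Z 0%Z (-2)%Z 0%Z) (kk (-2)%Z 0%Z (-2)%Z 0%Z) (kk (-2)%Z 0%Z 2%Z 0%Z));
  (mm4 (kk 0%Z 0%Z 0%Z 0%Z) (kk (-2)%Z 0%Z 0%Z (-2)%Z) (kk (-2)%Z 0%Z 0%Z (-2)%Z) (kk 0%Z 0%Z 0%Z 0%Z));
  (mm4 (kk 1%Z (-1)%Z 1%Z 1%Z) (kk (-1)%Z 1%Z (-1)%Z (-1)%Z) (kk (-1)%Z (-1)%Z 1%Z (-1)%Z) (kk (-1)%Z (-1)%Z 1%Z (-1)%Z));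
  (mm4 (kk 0%Z 0%Z 0%Z 0%Z) (kk 0%Z 0%Z (-4)%Z 0%Z) (kk 0%Z 0%Z (-4)%Z 0%Z) (kk 0%Z 0%Z 0%Z 0%Z));
  (mm4 (kk 2%Z 0%Z (-2)%Z 0%Z) (kk (-2)%Z 0%Z (-2)%Z 0%Z) (kk 2%Z 0%Z (-2)%Z 0%Z) (kk 2%Z 0%Z 2%Z 0%Z));
  (mm4 (kk 0%Z 2%Z (-2)%Z 0%Z) (kk 0%Z 0%Z 0%Z 0%Z) (kk 0%Z 0%Z 0%Z 0%Z) (kk 0%Z 2%Z (-2)%Z 0%Z));
  (mm4 (kk 0%Z 0%Z 4%Z 0%Z) (kk 0%Z 0%Z 0%Z 0%Z) (kk 0%Z 0%Z 0%Z 0%Z) (kk 0%Z 0%Z (-4)%Z 0%Z));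
  (mm4 (kk 1%Z (-1)%Z 1%Z 1%Z) (kk (-1)%Z (-1)%Z 1%Z (-1)%Z) (kk (-1)%Z 1%Z (-1)%Z (-1)%Z) (kk (-1)%Z (-1)%Z 1%Z (-1)%Z));
  (mm4 (kk (-2)%Z 0%Z 2%Z 0%Z) (kk (-2)%Z 0%Z (-2)%Z 0%Z) (kk 2%Z 0%Z (-2)%Z 0%Z) (kk (-2)%Z 0%Z (-2)%Z 0%Z));
  (mm4 (kk (-2)%Z 0%Z (-2)%Z 0%Z) (kk (-2)%Z 0%Z (-2)%Z 0%Z) (kk 2%Z 0%Z (-2)%Z 0%Z) (kk (-2)%Z 0%Z 2%Z 0%Z));
  (mm4 (kk (-1)%Z 1%Z (-1)%Z (-1)%Z) (kk (-1)%Z (-1)%Z 1%Z (-1)%Z) (kk (-1)%Z 1%Z (-1)%Z (-1)%Z) (kk 1%Z 1%Z (-1)%Z 1%Z));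
  (mm4 (kk 0%Z 0%Z 0%Z 0%Z) (kk 0%Z (-2)%Z 2%Z 0%Z) (kk 0%Z 2%Z (-2)%Z 0%Z) (kk 0%Z 0%Z 0%Z 0%Z));
  (mm4 (kk 0%Z 0%Z 0%Z 0%Z) (kk (-4)%Z 0%Z 0%Z 0%Z) (kk 4%Z 0%Z 0%Z 0%Z) (kk 0%Z 0%Z 0%Z 0%Z));
  (mm4 (kk (-1)%Z 1%Z (-1)%Z (-1)%Z) (kk 1%Z (-1)%Z 1%Z 1%Z) (kk 1%Z 1%Z (-1)%Z 1%Z) (kk 1%Z 1%Z (-1)%Z 1%Z));
  (mm4 (kk (-1)%Z 1%Z (-1)%Z (-1)%Z) (kk 1%Z 1%Z (-1)%Z 1%Z) (kk 1%Z (-1)%Z 1%Z 1%Z) (kk 1%Z 1%Z (-1)%Z 1%Z));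
  (mm4 (kk 1%Z (-1)%Z (-1)%Z (-1)%Z) (kk (-1)%Z 1%Z 1%Z 1%Z) (kk 1%Z 1%Z 1%Z (-1)%Z) (kk 1%Z 1%Z 1%Z (-1)%Z));
  (mm4 (kk 1%Z (-1)%Z 1%Z 1%Z) (kk 1%Z (-1)%Z 1%Z 1%Z) (kk 1%Z 1%Z (-1)%Z 1%Z) (kk (-1)%Z (-1)%Z 1%Z (-1)%Z));
  (mm4 (kk (-2)%Z 0%Z 2%Z 0%Z) (kk (-2)%Z 0%Z 2%Z 0%Z) (kk 2%Z 0%Z 2%Z 0%Z) (kk (-2)%Z 0%Z (-2)%Z 0%Z));
  (mm4 (kk (-1)%Z (-1)%Z 1%Z (-1)%Z) (kk 1%Z (-1)%Z 1%Z 1%Z) (kk 1%Z 1%Z (-1)%Z 1%Z) (kk 1%Z (-1)%Z 1%Z 1%Z));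
  (mm4 (kk (-2)%Z 0%Z (-2)%Z 0%Z) (kk (-2)%Z 0%Z 2%Z 0%Z) (kk 2%Z 0%Z 2%Z 0%Z) (kk (-2)%Z 0%Z 2%Z 0%Z));
  (mm4 (kk (-2)%Z 0%Z 0%Z (-2)%Z) (kk 0%Z 0%Z 0%Z 0%Z) (kk 0%Z 0%Z 0%Z 0%Z) (kk 2%Z 0%Z 0%Z 2%Z));
  (mm4 (kk (-1)%Z (-1)%Z (-1)%Z 1%Z) (kk 1%Z 1%Z 1%Z (-1)%Z) (kk (-1)%Z 1%Z 1%Z 1%Z) (kk (-1)%Z 1%Z 1%Z 1%Z));
  (mm4 (kk 1%Z (-1)%Z (-1)%Z (-1)%Z) (kk 1%Z 1%Z 1%Z (-1)%Z) (kk (-1)%Z 1%Z 1%Z 1%Z) (kk 1%Z 1%Z 1%Z (-1)%Z));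
  (mm4 (kk (-1)%Z (-1)%Z (-1)%Z 1%Z) (kk (-1)%Z 1%Z 1%Z 1%Z) (kk 1%Z 1%Z 1%Z (-1)%Z) (kk (-1)%Z 1%Z 1%Z 1%Z));
  (mm4 (kk (-1)%Z (-1)%Z 1%Z (-1)%Z) (kk 1%Z 1%Z (-1)%Z 1%Z) (kk 1%Z (-1)%Z 1%Z 1%Z) (kk 1%Z (-1)%Z 1%Z 1%Z));
  (mm4 (kk (-1)%Z 1%Z (-1)%Z (-1)%Z) (kk (-1)%Z 1%Z (-1)%Z (-1)%Z) (kk (-1)%Z (-1)%Z 1%Z (-1)%Z) (kk 1%Z 1%Z (-1)%Z 1%Z));
  (mm4 (kk 0%Z 0%Z 4%Z 0%Z) (kk 0%Z 0%Z 0%Z 0%Z) (kk 0%Z 0%Z 0%Z 0%Z) (kk 0%Z 0%Z 4%Z 0%Z));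
  (mm4 (kk 1%Z (-1)%Z 1%Z 1%Z) (kk (-1)%Z (-1)%Z 1%Z (-1)%Z) (kk 1%Z (-1)%Z 1%Z 1%Z) (kk 1%Z 1%Z (-1)%Z 1%Z));
  (mm4 (kk (-2)%Z 0%Z 2%Z 0%Z) (kk (-2)%Z 0%Z (-2)%Z 0%Z) (kk (-2)%Z 0%Z 2%Z 0%Z) (kk 2%Z 0%Z 2%Z 0%Z));
  (mm4 (kk (-2)%Z 0%Z (-2)%Z 0%Z) (kk (-2)%Z 0%Z (-2)%Z 0%Z) (kk (-2)%Z 0%Z 2%Z 0%Z) (kk 2%Z 0%Z (-2)%Z 0%Z));
  (mm4 (kk (-1)%Z 1%Z (-1)%Z (-1)%Z) (kk (-1)%Z (-1)%Z 1%Z (-1)%Z) (kk 1%Z (-1)%Z 1%Z 1%Z) (kk (-1)%Z (-1)%Z 1%Z (-1)%Z));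
  (mm4 (kk 0%Z 0%Z 0%Z 0%Z) (kk 0%Z (-2)%Z 2%Z 0%Z) (kk 0%Z (-2)%Z 2%Z 0%Z) (kk 0%Z 0%Z 0%Z 0%Z));
  (mm4 (kk 0%Z 0%Z 0%Z 0%Z) (kk (-4)%Z 0%Z 0%Z 0%Z) (kk (-4)%Z 0%Z 0%Z 0%Z) (kk 0%Z 0%Z 0%Z 0%Z));
  (mm4 (kk (-1)%Z 1%Z (-1)%Z (-1)%Z) (kk 1%Z (-1)%Z 1%Z 1%Z) (kk (-1)%Z (-1)%Z 1%Z (-1)%Z) (kk (-1)%Z (-1)%Z 1%Z (-1)%Z));
  (mm4 (kk (-1)%Z 1%Z (-1)%Z (-1)%Z) (kk 1%Z 1%Z (-1)%Z 1%Z) (kk (-1)%Z 1%Z (-1)%Z (-1)%Z) (kk (-1)%Z (-1)%Z 1%Z (-1)%Z));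
  (mm4 (kk 1%Z (-1)%Z (-1)%Z (-1)%Z) (kk (-1)%Z 1%Z 1%Z 1%Z) (kk (-1)%Z (-1)%Z (-1)%Z 1%Z) (kk (-1)%Z (-1)%Z (-1)%Z 1%Z));
  (mm4 (kk 1%Z (-1)%Z 1%Z 1%Z) (kk 1%Z (-1)%Z 1%Z 1%Z) (kk (-1)%Z (-1)%Z 1%Z (-1)%Z) (kk 1%Z 1%Z (-1)%Z 1%Z));
  (mm4 (kk (-2)%Z 0%Z 2%Z 0%Z) (kk (-2)%Z 0%Z 2%Z 0%Z) (kk (-2)%Z 0%Z (-2)%Z 0%Z) (kk 2%Z 0%Z 2%Z 0%Z));
  (mm4 (kk (-1)%Z (-1)%Z 1%Z (-1)%Z) (kk 1%Z (-1)%Z 1%Z 1%Z) (kk (-1)%Z (-1)%Z 1%Z (-1)%Z) (kk (-1)%Z 1%Z (-1)%Z (-1)%Z));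
  (mm4 (kk (-2)%Z 0%Z (-2)%Z 0%Z) (kk (-2)%Z 0%Z 2%Z 0%Z) (kk (-2)%Z 0%Z (-2)%Z 0%Z) (kk 2%Z 0%Z (-2)%Z 0%Z));
  (mm4 (kk (-2)%Z 0%Z 0%Z (-2)%Z) (kk 0%Z 0%Z 0%Z 0%Z) (kk 0%Z 0%Z 0%Z 0%Z) (kk (-2)%Z 0%Z 0%Z (-2)%Z));
  (mm4 (kk (-1)%Z (-1)%Z (-1)%Z 1%Z) (kk 1%Z 1%Z 1%Z (-1)%Z) (kk 1%Z (-1)%Z (-1)%Z (-1)%Z) (kk 1%Z (-1)%Z (-1)%Z (-1)%Z));
  (mm4 (kk 1%Z (-1)%Z (-1)%Z (-1)%Z) (kk 1%Z 1%Z 1%Z (-1)%Z) (kk 1%Z (-1)%Z (-1)%Z (-1)%Z) (kk (-1)%Z (-1)%Z (-1)%Z 1%Z));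
  (mm4 (kk (-1)%Z (-1)%Z (-1)%Z 1%Z) (kk (-1)%Z 1%Z 1%Z 1%Z) (kk (-1)%Z (-1)%Z (-1)%Z 1%Z) (kk 1%Z (-1)%Z (-1)%Z (-1)%Z));
  (mm4 (kk (-1)%Z (-1)%Z 1%Z (-1)%Z) (kk 1%Z 1%Z (-1)%Z 1%Z) (kk (-1)%Z 1%Z (-1)%Z (-1)%Z) (kk (-1)%Z 1%Z (-1)%Z (-1)%Z));
  (mm4 (kk (-1)%Z 1%Z (-1)%Z (-1)%Z) (kk (-1)%Z 1%Z (-1)%Z (-1)%Z) (kk 1%Z 1%Z (-1)%Z 1%Z) (kk (-1)%Z (-1)%Z 1%Z (-1)%Z));
  (mm4 (kk (-2)%Z 0%Z 0%Z 2%Z) (kk 0%Z 0%Z 0%Z 0%Z) (kk 0%Z 0%Z 0%Z 0%Z) (kk 2%Z 0%Z 0%Z (-2)%Z));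
  (mm4 (kk 0%Z (-2)%Z 2%Z 0%Z) (kk 0%Z 0%Z 0%Z 0%Z) (kk 0%Z 0%Z 0%Z 0%Z) (kk 0%Z 2%Z (-2)%Z 0%Z));
  (mm4 (kk (-1)%Z (-1)%Z 1%Z (-1)%Z) (kk (-1)%Z 1%Z (-1)%Z (-1)%Z) (kk 1%Z 1%Z (-1)%Z 1%Z) (kk (-1)%Z 1%Z (-1)%Z (-1)%Z));
  (mm4 (kk 1%Z (-1)%Z (-1)%Z (-1)%Z) (kk 1%Z (-1)%Z (-1)%Z (-1)%Z) (kk 1%Z 1%Z 1%Z (-1)%Z) (kk (-1)%Z (-1)%Z (-1)%Z 1%Z));
  (mm4 (kk (-1)%Z (-1)%Z (-1)%Z 1%Z) (kk 1%Z (-1)%Z (-1)%Z (-1)%Z) (kk 1%Z 1%Z 1%Z (-1)%Z) (kk 1%Z (-1)%Z (-1)%Z (-1)%Z));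
  (mm4 (kk 2%Z 0%Z 0%Z (-2)%Z) (kk 0%Z 0%Z 0%Z 0%Z) (kk 0%Z 0%Z 0%Z 0%Z) (kk (-2)%Z 0%Z 0%Z 2%Z));
  (mm4 (kk (-1)%Z (-1)%Z (-1)%Z 1%Z) (kk (-1)%Z (-1)%Z (-1)%Z 1%Z) (kk (-1)%Z 1%Z 1%Z 1%Z) (kk 1%Z (-1)%Z (-1)%Z (-1)%Z));
  (mm4 (kk (-1)%Z (-1)%Z 1%Z (-1)%Z) (kk (-1)%Z (-1)%Z 1%Z (-1)%Z) (kk 1%Z (-1)%Z 1%Z 1%Z) (kk (-1)%Z 1%Z (-1)%Z (-1)%Z));
  (mm4 (kk 1%Z (-1)%Z (-1)%Z (-1)%Z) (kk (-1)%Z (-1)%Z (-1)%Z 1%Z) (kk (-1)%Z 1%Z 1%Z 1%Z) (kk (-1)%Z (-1)%Z (-1)%Z 1%Z));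
  (mm4 (kk 0%Z 0%Z (-4)%Z 0%Z) (kk 0%Z 0%Z 0%Z 0%Z) (kk 0%Z 0%Z 0%Z 0%Z) (kk 0%Z 0%Z 4%Z 0%Z));
  (mm4 (kk (-2)%Z 0%Z 0%Z 2%Z) (kk 0%Z 0%Z 0%Z 0%Z) (kk 0%Z 0%Z 0%Z 0%Z) (kk (-2)%Z 0%Z 0%Z 2%Z));
  (mm4 (kk 0%Z (-2)%Z 2%Z 0%Z) (kk 0%Z 0%Z 0%Z 0%Z) (kk 0%Z 0%Z 0%Z 0%Z) (kk 0%Z (-2)%Z 2%Z 0%Z));
  (mm4 (kk (-1)%Z (-1)%Z 1%Z (-1)%Z) (kk (-1)%Z 1%Z (-1)%Z (-1)%Z) (kk (-1)%Z (-1)%Z 1%Z (-1)%Z) (kk 1%Z (-1)%Z 1%Z 1%Z));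
  (mm4 (kk 1%Z (-1)%Z (-1)%Z (-1)%Z) (kk 1%Z (-1)%Z (-1)%Z (-1)%Z) (kk (-1)%Z (-1)%Z (-1)%Z 1%Z) (kk 1%Z 1%Z 1%Z (-1)%Z));
  (mm4 (kk (-1)%Z (-1)%Z (-1)%Z 1%Z) (kk 1%Z (-1)%Z (-1)%Z (-1)%Z) (kk (-1)%Z (-1)%Z (-1)%Z 1%Z) (kk (-1)%Z 1%Z 1%Z 1%Z));
  (mm4 (kk 2%Z 0%Z 0%Z (-2)%Z) (kk 0%Z 0%Z 0%Z 0%Z) (kk 0%Z 0%Z 0%Z 0%Z) (kk 2%Z 0%Z 0%Z (-2)%Z));
  (mm4 (kk (-1)%Z (-1)%Z (-1)%Z 1%Z) (kk (-1)%Z (-1)%Z (-1)%Z 1%Z) (kk 1%Z (-1)%Z (-1)%Z (-1)%Z) (kk (-1)%Z 1%Z 1%Z 1%Z));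
  (mm4 (kk (-1)%Z (-1)%Z 1%Z (-1)%Z) (kk (-1)%Z (-1)%Z 1%Z (-1)%Z) (kk (-1)%Z 1%Z (-1)%Z (-1)%Z) (kk 1%Z (-1)%Z 1%Z 1%Z));
  (mm4 (kk 1%Z (-1)%Z (-1)%Z (-1)%Z) (kk (-1)%Z (-1)%Z (-1)%Z 1%Z) (kk 1%Z (-1)%Z (-1)%Z (-1)%Z) (kk 1%Z 1%Z 1%Z (-1)%Z));
  (mm4 (kk 0%Z 0%Z (-4)%Z 0%Z) (kk 0%Z 0%Z 0%Z 0%Z) (kk 0%Z 0%Z 0%Z 0%Z) (kk 0%Z 0%Z (-4)%Z 0%Z));
  (mm4 (kk 0%Z (-2)%Z (-2)%Z 0%Z) (kk 0%Z 0%Z 0%Z 0%Z) (kk 0%Z 0%Z 0%Z 0%Z) (kk 0%Z 2%Z 2%Z 0%Z));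
  (mm4 (kk (-4)%Z 0%Z 0%Z 0%Z) (kk 0%Z 0%Z 0%Z 0%Z) (kk 0%Z 0%Z 0%Z 0%Z) (kk 4%Z 0%Z 0%Z 0%Z));
  (mm4 (kk 0%Z (-2)%Z (-2)%Z 0%Z) (kk 0%Z 0%Z 0%Z 0%Z) (kk 0%Z 0%Z 0%Z 0%Z) (kk 0%Z (-2)%Z (-2)%Z 0%Z));
  (mm4 (kk (-4)%Z 0%Z 0%Z 0%Z) (kk 0%Z 0%Z 0%Z 0%Z) (kk 0%Z 0%Z 0%Z 0%Z) (kk (-4)%Z 0%Z 0%Z 0%Z))].
Definition C1lit : seq Mat := [::
  (mm4 (kk 1%Z 1%Z (-1)%Z 1%Z) (kk 1%Z 1%Z (-1)%Z 1%Z) (kk (-1)%Z 1%Z (-1)%Z (-1)%Z) (kk 1%Z (-1)%Z 1%Z 1%Z));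
  (mm4 (kk 1%Z 1%Z (-1)%Z 1%Z) (kk (-1)%Z (-1)%Z 1%Z (-1)%Z) (kk 1%Z (-1)%Z 1%Z 1%Z) (kk 1%Z (-1)%Z 1%Z 1%Z));
  (mm4 (kk 1%Z (-1)%Z 1%Z 1%Z) (kk (-1)%Z 1%Z (-1)%Z (-1)%Z) (kk 1%Z 1%Z (-1)%Z 1%Z) (kk 1%Z 1%Z (-1)%Z 1%Z));
  (mm4 (kk 1%Z (-1)%Z 1%Z 1%Z) (kk 1%Z (-1)%Z 1%Z 1%Z) (kk (-1)%Z (-1)%Z 1%Z (-1)%Z) (kk 1%Z 1%Z (-1)%Z 1%Z));
  (mm4 (kk 1%Z 1%Z 1%Z (-1)%Z) (kk (-1)%Z 1%Z 1%Z 1%Z) (kk 1%Z 1%Z 1%Z (-1)%Z) (kk 1%Z (-1)%Z (-1)%Z (-1)%Z));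
  (mm4 (kk 1%Z 1%Z 1%Z (-1)%Z) (kk 1%Z (-1)%Z (-1)%Z (-1)%Z) (kk (-1)%Z (-1)%Z (-1)%Z 1%Z) (kk 1%Z (-1)%Z (-1)%Z (-1)%Z));
  (mm4 (kk 1%Z (-1)%Z (-1)%Z (-1)%Z) (kk 1%Z 1%Z 1%Z (-1)%Z) (kk (-1)%Z 1%Z 1%Z 1%Z) (kk 1%Z 1%Z 1%Z (-1)%Z));
  (mm4 (kk 1%Z (-1)%Z (-1)%Z (-1)%Z) (kk (-1)%Z (-1)%Z (-1)%Z 1%Z) (kk 1%Z (-1)%Z (-1)%Z (-1)%Z) (kk 1%Z 1%Z 1%Z (-1)%Z))].
Definition C2lit : seq Mat := [::
  (mm4 (kk 1%Z 1%Z (-1)%Z 1%Z) (kk (-1)%Z 1%Z (-1)%Z (-1)%Z) (kk 1%Z 1%Z (-1)%Z 1%Z) (kk 1%Z (-1)%Z 1%Z 1%Z));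
  (mm4 (kk 1%Z 1%Z (-1)%Z 1%Z) (kk 1%Z (-1)%Z 1%Z 1%Z) (kk (-1)%Z (-1)%Z 1%Z (-1)%Z) (kk 1%Z (-1)%Z 1%Z 1%Z));
  (mm4 (kk 1%Z (-1)%Z 1%Z 1%Z) (kk 1%Z 1%Z (-1)%Z 1%Z) (kk (-1)%Z 1%Z (-1)%Z (-1)%Z) (kk 1%Z 1%Z (-1)%Z 1%Z));
  (mm4 (kk 1%Z (-1)%Z 1%Z 1%Z) (kk (-1)%Z (-1)%Z 1%Z (-1)%Z) (kk 1%Z (-1)%Z 1%Z 1%Z) (kk 1%Z 1%Z (-1)%Z 1%Z));
  (mm4 (kk 1%Z 1%Z 1%Z (-1)%Z) (kk 1%Z 1%Z 1%Z (-1)%Z) (kk (-1)%Z 1%Z 1%Z 1%Z) (kk 1%Z (-1)%Z (-1)%Z (-1)%Z));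
  (mm4 (kk 1%Z 1%Z 1%Z (-1)%Z) (kk (-1)%Z (-1)%Z (-1)%Z 1%Z) (kk 1%Z (-1)%Z (-1)%Z (-1)%Z) (kk 1%Z (-1)%Z (-1)%Z (-1)%Z));
  (mm4 (kk 1%Z (-1)%Z (-1)%Z (-1)%Z) (kk (-1)%Z 1%Z 1%Z 1%Z) (kk 1%Z 1%Z 1%Z (-1)%Z) (kk 1%Z 1%Z 1%Z (-1)%Z));
  (mm4 (kk 1%Z (-1)%Z (-1)%Z (-1)%Z) (kk 1%Z (-1)%Z (-1)%Z (-1)%Z) (kk (-1)%Z (-1)%Z (-1)%Z 1%Z) (kk 1%Z 1%Z 1%Z (-1)%Z))].
Definition CSlit : seq Mat := [::
  (mm4 (kk 4%Z 0%Z 0%Z 0%Z) (kk 0%Z 0%Z 0%Z 0%Z) (kk 0%Z 0%Z 0%Z 0%Z) (kk (-4)%Z 0%Z 0%Z 0%Z));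
  (mm4 (kk 0%Z 0%Z 0%Z 0%Z) (kk 4%Z 0%Z 0%Z 0%Z) (kk 4%Z 0%Z 0%Z 0%Z) (kk 0%Z 0%Z 0%Z 0%Z));
  (mm4 (kk 0%Z 0%Z 0%Z 0%Z) (kk 0%Z 0%Z (-4)%Z 0%Z) (kk 0%Z 0%Z 4%Z 0%Z) (kk 0%Z 0%Z 0%Z 0%Z));
  (mm4 (kk 0%Z 0%Z 0%Z 0%Z) (kk (-4)%Z 0%Z 0%Z 0%Z) (kk (-4)%Z 0%Z 0%Z 0%Z) (kk 0%Z 0%Z 0%Z 0%Z));
  (mm4 (kk 0%Z 0%Z 0%Z 0%Z) (kk 0%Z 0%Z 4%Z 0%Z) (kk 0%Z 0%Z (-4)%Z 0%Z) (kk 0%Z 0%Z 0%Z 0%Z));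
  (mm4 (kk (-4)%Z 0%Z 0%Z 0%Z) (kk 0%Z 0%Z 0%Z 0%Z) (kk 0%Z 0%Z 0%Z 0%Z) (kk 4%Z 0%Z 0%Z 0%Z))].
Definition tab : seq (seq (seq (seq (seq nat)))) := [::
[::[::[::[::2];[::0];[::1]];[::[::0;2;0;0];[::0];[::1]];[::[::1;2;1;1];[::0];[::1]];[::[::2;0;2;0;0;2];[::0];[::1]];[::[::0;0;2;0];[::0];[::1]];[::[::0;0;1;1;2;1;0];[::0];[::1]]];
 [::[::[::2];[::0];[::2;1;2]];[::[::0;2;0;0];[::0];[::0;0;1;0]];[::[::2;0;0;2;0;2];[::0];[::0;0;1;0]];[::[::1;1;2;1];[::0];[::0;0;1;0]];[::[::0;0;2;0];[::0];[::0;0;1;0]];[::[::0;1;0;0;1;2;1];[::0];[::2;1;2]]];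
 [::[::[::2];[::0];[::0;1;0;0]];[::[::0;2;0;0];[::0];[::2;1;2]];[::[::1;2;1;1];[::0];[::0;1;0;0]];[::[::1;1;2;1];[::0];[::2;1;2]];[::[::0;0;2;0];[::0];[::0;1;0;0]];[::[::0;0;1;0;1;2;1];[::0];[::0;1;0;0]]];
 [::[::[::2];[::0];[::0;2;0;0;2;1]];[::[::0;2;0;0];[::0];[::0;0;2;1;2;0]];[::[::2;0;0;2;0;2];[::0];[::2;1;2]];[::[::2;0;2;0;0;2];[::0];[::0;0;2;1;2;0]];[::[::0;0;2;0];[::0];[::2;1;2]];[::[::0;0;1;2;1;2;0;2;1];[::0];[::0;2;0;0;2;1]]];
 [::[::[::2];[::0];[::1;1]];[::[::0;2;0;0];[::0];[::1;1]];[::[::1;1;2;1];[::0];[::1;1]];[::[::2;0;2;0;0;2];[::0];[::1;1]];[::[::0;0;2;0];[::0];[::1;1]];[::[::0;0;1;0;1;2;1];[::0];[::1;1]]];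
 [::[::[::2];[::0];[::2;1;1;2]];[::[::0;2;0;0];[::0];[::0;0;1;1;0]];[::[::2;0;0;2;0;2];[::0];[::0;0;1;1;0]];[::[::1;2;1;1];[::0];[::0;0;1;1;0]];[::[::0;0;2;0];[::0];[::0;0;1;1;0]];[::[::0;1;0;1;0;1;2];[::0];[::2;1;1;2]]];
 [::[::[::2];[::0];[::0;1;1;0;0]];[::[::0;2;0;0];[::0];[::2;1;1;2]];[::[::1;1;2;1];[::0];[::0;1;1;0;0]];[::[::1;2;1;1];[::0];[::2;1;1;2]];[::[::0;0;2;0];[::0];[::0;1;1;0;0]];[::[::0;0;1;2;1;1;0];[::0];[::0;1;1;0;0]]];
 [::[::[::2];[::0];[::0;2;0;0;2;1;1]];[::[::0;2;0;0];[::0];[::0;0;2;0;1;2;1]];[::[::2;0;0;2;0;2];[::0];[::2;1;1;2]];[::[::2;0;2;0;0;2];[::0];[::0;0;2;0;1;2;1]];[::[::0;0;2;0];[::0];[::2;1;1;2]];[::[::0;0;2;0;2;0;0;2;0];[::0];[::0;2;0;0;2;1;1]]]];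
[::[::[::[::2];[::2;0;2];[::1]];[::[::1;1;2;1];[::1;0;1;1];[::1]];[::[::0;0;2;0];[::1;0;1;1];[::1]];[::[::0;2;0;0];[::1;0;1;1];[::1]];[::[::2;0;0;2;0;2];[::1;0;1;1];[::1]];[::[::0;1;0;0;1;2;1];[::2;0;2];[::1]]];
 [::[::[::2];[::2;0;2];[::2;1;2]];[::[::2;0;2;0;0;2];[::1;1;0;1];[::0;1;0;0]];[::[::0;0;2;0];[::1;1;0;1];[::0;1;0;0]];[::[::0;2;0;0];[::1;1;0;1];[::0;1;0;0]];[::[::1;2;1;1];[::1;1;0;1];[::0;1;0;0]];[::[::0;0;1;1;2;1;0];[::2;0;2];[::2;1;2]]];
 [::[::[::2];[::2;0;2];[::0;0;2;1;2;0]];[::[::2;0;2;0;0;2];[::0;2;0;2;0;0];[::2;1;2]];[::[::0;0;2;0];[::0;0;2;0;2;0];[::0;2;0;0;2;1]];[::[::0;2;0;0];[::0;2;0;2;0;0];[::2;1;2]];[::[::2;0;0;2;0;2];[::0;0;2;0;2;0];[::0;2;0;0;2;1]];[::[::0;0;1;2;1;2;0;2;1];[::2;0;2];[::0;0;2;1;2;0]]];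
 [::[::[::2];[::2;0;2];[::0;0;1;0]];[::[::1;1;2;1];[::0;1;1;2;1;2];[::0;0;1;0]];[::[::0;0;2;0];[::0;0;2;0;2;0];[::2;1;2]];[::[::0;2;0;0];[::0;1;1;2;1;2];[::0;0;1;0]];[::[::1;2;1;1];[::0;0;2;0;2;0];[::2;1;2]];[::[::0;0;1;0;1;2;1];[::2;0;2];[::0;0;1;0]]];
 [::[::[::2];[::2;0;2];[::1;1]];[::[::1;2;1;1];[::1;1;0;1];[::1;1]];[::[::0;0;2;0];[::1;1;0;1];[::1;1]];[::[::0;2;0;0];[::1;1;0;1];[::1;1]];[::[::2;0;0;2;0;2];[::1;1;0;1];[::1;1]];[::[::0;1;0;1;0;1;2];[::2;0;2];[::1;1]]];
 [::[::[::2];[::2;0;2];[::2;1;1;2]];[::[::2;0;2;0;0;2];[::1;0;1;1];[::0;1;1;0;0]];[::[::0;0;2;0];[::1;0;1;1];[::0;1;1;0;0]];[::[::0;2;0;0];[::1;0;1;1];[::0;1;1;0;0]];[::[::1;1;2;1];[::1;0;1;1];[::0;1;1;0;0]];[::[::0;0;1;0;1;2;1];[::2;0;2];[::2;1;1;2]]];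
 [::[::[::2];[::2;0;2];[::0;0;2;0;1;2;1]];[::[::2;0;2;0;0;2];[::0;2;0;2;0;0];[::2;1;1;2]];[::[::0;0;2;0];[::0;0;2;0;2;0];[::0;2;0;0;2;1;1]];[::[::0;2;0;0];[::0;2;0;2;0;0];[::2;1;1;2]];[::[::2;0;0;2;0;2];[::0;0;2;0;2;0];[::0;2;0;0;2;1;1]];[::[::0;0;2;0;2;0;0;2;0];[::2;0;2];[::0;0;2;0;1;2;1]]];
 [::[::[::2];[::2;0;2];[::0;0;1;1;0]];[::[::1;2;1;1];[::0;1;2;1;1;2];[::0;0;1;1;0]];[::[::0;0;2;0];[::0;0;2;0;2;0];[::2;1;1;2]];[::[::0;2;0;0];[::0;1;2;1;1;2];[::0;0;1;1;0]];[::[::1;1;2;1];[::0;0;2;0;2;0];[::2;1;1;2]];[::[::0;0;1;2;1;1;0];[::2;0;2];[::0;0;1;1;0]]]];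
[::[::[::[::2];[::1;1;0;1];[::1]];[::[::1;1;2;1];[::2;0;2];[::1]];[::[::1;2;1;1];[::1;1;0;1];[::1]];[::[::0;2;0;0];[::2;0;2];[::1]];[::[::0;0;2;0];[::1;1;0;1];[::1]];[::[::0;0;1;0;1;2;1];[::1;1;0;1];[::1]]];
 [::[::[::2];[::0;0;2;0;2;0];[::2;1;2]];[::[::2;0;2;0;0;2];[::2;0;2];[::0;2;0;0;2;1]];[::[::2;0;0;2;0;2];[::0;2;0;2;0;0];[::0;0;2;1;2;0]];[::[::0;2;0;0];[::2;0;2];[::0;2;0;0;2;1]];[::[::0;0;2;0];[::0;2;0;2;0;0];[::0;0;2;1;2;0]];[::[::0;0;1;2;1;2;0;2;1];[::0;0;2;0;2;0];[::2;1;2]]];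
 [::[::[::2];[::1;0;1;1];[::0;0;1;0]];[::[::2;0;2;0;0;2];[::2;0;2];[::2;1;2]];[::[::1;2;1;1];[::1;0;1;1];[::0;0;1;0]];[::[::0;2;0;0];[::2;0;2];[::2;1;2]];[::[::0;0;2;0];[::1;0;1;1];[::0;0;1;0]];[::[::0;0;1;1;2;1;0];[::1;0;1;1];[::0;0;1;0]]];
 [::[::[::2];[::0;0;2;0;2;0];[::0;1;0;0]];[::[::1;1;2;1];[::2;0;2];[::0;1;0;0]];[::[::2;0;0;2;0;2];[::0;1;1;2;1;2];[::2;1;2]];[::[::0;2;0;0];[::2;0;2];[::0;1;0;0]];[::[::0;0;2;0];[::0;1;1;2;1;2];[::2;1;2]];[::[::0;1;0;0;1;2;1];[::0;0;2;0;2;0];[::0;1;0;0]]];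
 [::[::[::2];[::1;0;1;1];[::1;1]];[::[::1;2;1;1];[::2;0;2];[::1;1]];[::[::1;1;2;1];[::1;0;1;1];[::1;1]];[::[::0;2;0;0];[::2;0;2];[::1;1]];[::[::0;0;2;0];[::1;0;1;1];[::1;1]];[::[::0;0;1;2;1;1;0];[::1;0;1;1];[::1;1]]];
 [::[::[::2];[::0;0;2;0;2;0];[::2;1;1;2]];[::[::2;0;2;0;0;2];[::2;0;2];[::0;2;0;0;2;1;1]];[::[::2;0;0;2;0;2];[::0;2;0;2;0;0];[::0;0;2;0;1;2;1]];[::[::0;2;0;0];[::2;0;2];[::0;2;0;0;2;1;1]];[::[::0;0;2;0];[::0;2;0;2;0;0];[::0;0;2;0;1;2;1]];[::[::0;0;2;0;2;0;0;2;0];[::0;0;2;0;2;0];[::2;1;1;2]]];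
 [::[::[::2];[::1;1;0;1];[::0;0;1;1;0]];[::[::2;0;2;0;0;2];[::2;0;2];[::2;1;1;2]];[::[::1;1;2;1];[::1;1;0;1];[::0;0;1;1;0]];[::[::0;2;0;0];[::2;0;2];[::2;1;1;2]];[::[::0;0;2;0];[::1;1;0;1];[::0;0;1;1;0]];[::[::0;0;1;0;1;2;1];[::1;1;0;1];[::0;0;1;1;0]]];
 [::[::[::2];[::0;0;2;0;2;0];[::0;1;1;0;0]];[::[::1;2;1;1];[::2;0;2];[::0;1;1;0;0]];[::[::2;0;0;2;0;2];[::0;1;2;1;1;2];[::2;1;1;2]];[::[::0;2;0;0];[::2;0;2];[::0;1;1;0;0]];[::[::0;0;2;0];[::0;1;2;1;1;2];[::2;1;1;2]];[::[::0;1;0;1;0;1;2];[::0;0;2;0;2;0];[::0;1;1;0;0]]]];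
[::[::[::[::2];[::0;2;0;2;0;0];[::1]];[::[::0;2;0;0];[::0;0;2;0;2;0];[::1]];[::[::0;0;2;0];[::2;0;2];[::1]];[::[::2;0;2;0;0;2];[::0;0;2;0;2;0];[::1]];[::[::2;0;0;2;0;2];[::2;0;2];[::1]];[::[::0;0;1;2;1;2;0;2;1];[::0;2;0;2;0;0];[::1]]];
 [::[::[::2];[::1;0;1;1];[::2;1;2]];[::[::0;2;0;0];[::1;0;1;1];[::0;1;0;2;0;2]];[::[::0;0;2;0];[::2;0;2];[::0;2;0;2;0;1]];[::[::1;1;2;1];[::1;0;1;1];[::0;1;0;2;0;2]];[::[::1;2;1;1];[::2;0;2];[::0;2;0;2;0;1]];[::[::0;0;1;0;1;2;1];[::1;0;1;1];[::2;1;2]]];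
 [::[::[::2];[::1;1;0;1];[::0;2;0;2;0;1]];[::[::0;2;0;0];[::1;1;0;1];[::2;1;2]];[::[::0;0;2;0];[::2;0;2];[::0;1;0;2;0;2]];[::[::1;1;2;1];[::1;1;0;1];[::2;1;2]];[::[::2;0;0;2;0;2];[::2;0;2];[::0;1;0;2;0;2]];[::[::0;1;0;0;1;2;1];[::1;1;0;1];[::0;2;0;2;0;1]]];
 [::[::[::2];[::0;1;1;2;1;2];[::0;1;0;2;0;2]];[::[::0;2;0;0];[::0;0;2;0;2;0];[::0;2;0;2;0;1]];[::[::0;0;2;0];[::2;0;2];[::2;1;2]];[::[::2;0;2;0;0;2];[::0;0;2;0;2;0];[::0;2;0;2;0;1]];[::[::1;2;1;1];[::2;0;2];[::2;1;2]];[::[::0;0;1;1;2;1;0];[::0;1;1;2;1;2];[::0;1;0;2;0;2]]];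
 [::[::[::2];[::0;2;0;2;0;0];[::1;1]];[::[::0;2;0;0];[::0;0;2;0;2;0];[::1;1]];[::[::0;0;2;0];[::2;0;2];[::1;1]];[::[::2;0;2;0;0;2];[::0;0;2;0;2;0];[::1;1]];[::[::2;0;0;2;0;2];[::2;0;2];[::1;1]];[::[::0;0;2;0;2;0;0;2;0];[::0;2;0;2;0;0];[::1;1]]];
 [::[::[::2];[::1;1;0;1];[::2;1;1;2]];[::[::0;2;0;0];[::1;1;0;1];[::0;1;1;0;2;0;2]];[::[::0;0;2;0];[::2;0;2];[::0;2;0;2;0;1;1]];[::[::1;2;1;1];[::1;1;0;1];[::0;1;1;0;2;0;2]];[::[::1;1;2;1];[::2;0;2];[::0;2;0;2;0;1;1]];[::[::0;0;1;2;1;1;0];[::1;1;0;1];[::2;1;1;2]]];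
 [::[::[::2];[::1;0;1;1];[::0;2;0;2;0;1;1]];[::[::0;2;0;0];[::1;0;1;1];[::2;1;1;2]];[::[::0;0;2;0];[::2;0;2];[::0;1;1;0;2;0;2]];[::[::1;2;1;1];[::1;0;1;1];[::2;1;1;2]];[::[::2;0;0;2;0;2];[::2;0;2];[::0;1;1;0;2;0;2]];[::[::0;1;0;1;0;1;2];[::1;0;1;1];[::0;2;0;2;0;1;1]]];
 [::[::[::2];[::0;1;2;1;1;2];[::0;1;1;0;2;0;2]];[::[::0;2;0;0];[::0;0;2;0;2;0];[::0;2;0;2;0;1;1]];[::[::0;0;2;0];[::2;0;2];[::2;1;1;2]];[::[::2;0;2;0;0;2];[::0;0;2;0;2;0];[::0;2;0;2;0;1;1]];[::[::1;1;2;1];[::2;0;2];[::2;1;1;2]];[::[::0;0;1;0;1;2;1];[::0;1;2;1;1;2];[::0;1;1;0;2;0;2]]]];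
[::[::[::[::2];[::0;0];[::1]];[::[::0;0;2;0];[::0;0];[::1]];[::[::1;2;1;1];[::0;0];[::1]];[::[::2;0;0;2;0;2];[::0;0];[::1]];[::[::0;2;0;0];[::0;0];[::1]];[::[::0;1;0;1;0;1;2];[::0;0];[::1]]];
 [::[::[::2];[::0;0];[::2;1;2]];[::[::0;0;2;0];[::0;0];[::0;1;0;0]];[::[::2;0;2;0;0;2];[::0;0];[::0;1;0;0]];[::[::1;1;2;1];[::0;0];[::0;1;0;0]];[::[::0;2;0;0];[::0;0];[::0;1;0;0]];[::[::0;0;1;0;1;2;1];[::0;0];[::2;1;2]]];
 [::[::[::2];[::0;0];[::0;0;1;0]];[::[::0;0;2;0];[::0;0];[::2;1;2]];[::[::1;2;1;1];[::0;0];[::0;0;1;0]];[::[::1;1;2;1];[::0;0];[::2;1;2]];[::[::0;2;0;0];[::0;0];[::0;0;1;0]];[::[::0;0;1;2;1;1;0];[::0;0];[::0;0;1;0]]];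
 [::[::[::2];[::0;0];[::0;0;2;0;2;1]];[::[::0;0;2;0];[::0;0];[::0;2;0;2;0;1]];[::[::2;0;2;0;0;2];[::0;0];[::2;1;2]];[::[::2;0;0;2;0;2];[::0;0];[::0;2;0;2;0;1]];[::[::0;2;0;0];[::0;0];[::2;1;2]];[::[::0;0;2;0;2;0;0;2;0];[::0;0];[::0;0;2;0;2;1]]];
 [::[::[::2];[::0;0];[::1;1]];[::[::0;0;2;0];[::0;0];[::1;1]];[::[::1;1;2;1];[::0;0];[::1;1]];[::[::2;0;0;2;0;2];[::0;0];[::1;1]];[::[::0;2;0;0];[::0;0];[::1;1]];[::[::0;1;0;0;1;2;1];[::0;0];[::1;1]]];
 [::[::[::2];[::0;0];[::2;1;1;2]];[::[::0;0;2;0];[::0;0];[::0;1;1;0;0]];[::[::2;0;2;0;0;2];[::0;0];[::0;1;1;0;0]];[::[::1;2;1;1];[::0;0];[::0;1;1;0;0]];[::[::0;2;0;0];[::0;0];[::0;1;1;0;0]];[::[::0;0;1;1;2;1;0];[::0;0];[::2;1;1;2]]];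
 [::[::[::2];[::0;0];[::0;0;1;1;0]];[::[::0;0;2;0];[::0;0];[::2;1;1;2]];[::[::1;1;2;1];[::0;0];[::0;0;1;1;0]];[::[::1;2;1;1];[::0;0];[::2;1;1;2]];[::[::0;2;0;0];[::0;0];[::0;0;1;1;0]];[::[::0;0;1;0;1;2;1];[::0;0];[::0;0;1;1;0]]];
 [::[::[::2];[::0;0];[::0;0;2;0;2;1;1]];[::[::0;0;2;0];[::0;0];[::0;0;1;2;0;2;1]];[::[::2;0;2;0;0;2];[::0;0];[::2;1;1;2]];[::[::2;0;0;2;0;2];[::0;0];[::0;0;1;2;0;2;1]];[::[::0;2;0;0];[::0;0];[::2;1;1;2]];[::[::0;0;1;2;1;2;0;2;1];[::0;0];[::0;0;2;0;2;1;1]]]];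
[::[::[::[::2];[::2;0;0;2];[::1]];[::[::1;1;2;1];[::1;0;0;1;1];[::1]];[::[::0;2;0;0];[::1;0;0;1;1];[::1]];[::[::0;0;2;0];[::1;0;0;1;1];[::1]];[::[::2;0;2;0;0;2];[::1;0;0;1;1];[::1]];[::[::0;0;1;0;1;2;1];[::2;0;0;2];[::1]]];
 [::[::[::2];[::2;0;0;2];[::2;1;2]];[::[::2;0;0;2;0;2];[::1;1;0;0;1];[::0;0;1;0]];[::[::0;2;0;0];[::1;1;0;0;1];[::0;0;1;0]];[::[::0;0;2;0];[::1;1;0;0;1];[::0;0;1;0]];[::[::1;2;1;1];[::1;1;0;0;1];[::0;0;1;0]];[::[::0;1;0;1;0;1;2];[::2;0;0;2];[::2;1;2]]];
 [::[::[::2];[::2;0;0;2];[::0;2;0;2;0;1]];[::[::2;0;0;2;0;2];[::0;0;2;0;0;2;0];[::2;1;2]];[::[::0;2;0;0];[::0;2;0;0;2;0;0];[::0;0;2;0;2;1]];[::[::0;0;2;0];[::0;0;2;0;0;2;0];[::2;1;2]];[::[::2;0;2;0;0;2];[::0;2;0;0;2;0;0];[::0;0;2;0;2;1]];[::[::0;0;2;0;2;0;0;2;0];[::2;0;0;2];[::0;2;0;2;0;1]]];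
 [::[::[::2];[::2;0;0;2];[::0;1;0;0]];[::[::1;1;2;1];[::0;0;1;1;2;1;2];[::0;1;0;0]];[::[::0;2;0;0];[::0;0;1;2;1;2;1];[::2;1;2]];[::[::0;0;2;0];[::0;0;1;1;2;1;2];[::0;1;0;0]];[::[::1;2;1;1];[::0;0;1;2;1;2;1];[::2;1;2]];[::[::0;0;1;2;1;1;0];[::2;0;0;2];[::0;1;0;0]]];
 [::[::[::2];[::2;0;0;2];[::1;1]];[::[::1;2;1;1];[::1;1;0;0;1];[::1;1]];[::[::0;2;0;0];[::1;1;0;0;1];[::1;1]];[::[::0;0;2;0];[::1;1;0;0;1];[::1;1]];[::[::2;0;2;0;0;2];[::1;1;0;0;1];[::1;1]];[::[::0;0;1;1;2;1;0];[::2;0;0;2];[::1;1]]];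
 [::[::[::2];[::2;0;0;2];[::2;1;1;2]];[::[::2;0;0;2;0;2];[::1;0;0;1;1];[::0;0;1;1;0]];[::[::0;2;0;0];[::1;0;0;1;1];[::0;0;1;1;0]];[::[::0;0;2;0];[::1;0;0;1;1];[::0;0;1;1;0]];[::[::1;1;2;1];[::1;0;0;1;1];[::0;0;1;1;0]];[::[::0;1;0;0;1;2;1];[::2;0;0;2];[::2;1;1;2]]];
 [::[::[::2];[::2;0;0;2];[::0;0;1;2;0;2;1]];[::[::2;0;0;2;0;2];[::0;0;2;0;0;2;0];[::2;1;1;2]];[::[::0;2;0;0];[::0;0;1;2;1;2;1];[::0;0;2;0;2;1;1]];[::[::0;0;2;0];[::0;0;2;0;0;2;0];[::2;1;1;2]];[::[::2;0;2;0;0;2];[::0;0;1;2;1;2;1];[::0;0;2;0;2;1;1]];[::[::0;0;1;2;1;2;0;2;1];[::2;0;0;2];[::0;0;1;2;0;2;1]]];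
 [::[::[::2];[::2;0;0;2];[::0;1;1;0;0]];[::[::1;2;1;1];[::0;0;1;2;1;1;2];[::0;1;1;0;0]];[::[::0;2;0;0];[::0;1;1;0;2;1;2];[::2;1;1;2]];[::[::0;0;2;0];[::0;0;1;2;1;1;2];[::0;1;1;0;0]];[::[::1;1;2;1];[::0;1;1;0;2;1;2];[::2;1;1;2]];[::[::0;0;1;0;1;2;1];[::2;0;0;2];[::0;1;1;0;0]]]];
[::[::[::[::2];[::1;1;0;0;1];[::1]];[::[::1;1;2;1];[::2;0;0;2];[::1]];[::[::1;2;1;1];[::1;1;0;0;1];[::1]];[::[::0;0;2;0];[::2;0;0;2];[::1]];[::[::0;2;0;0];[::1;1;0;0;1];[::1]];[::[::0;0;1;2;1;1;0];[::1;1;0;0;1];[::1]]];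
 [::[::[::2];[::0;2;0;0;2;0;0];[::2;1;2]];[::[::2;0;0;2;0;2];[::2;0;0;2];[::0;0;2;0;2;1]];[::[::2;0;2;0;0;2];[::0;0;2;0;0;2;0];[::0;2;0;2;0;1]];[::[::0;0;2;0];[::2;0;0;2];[::0;0;2;0;2;1]];[::[::0;2;0;0];[::0;0;2;0;0;2;0];[::0;2;0;2;0;1]];[::[::0;0;2;0;2;0;0;2;0];[::0;2;0;0;2;0;0];[::2;1;2]]];
 [::[::[::2];[::1;0;0;1;1];[::0;1;0;0]];[::[::2;0;0;2;0;2];[::2;0;0;2];[::2;1;2]];[::[::1;2;1;1];[::1;0;0;1;1];[::0;1;0;0]];[::[::0;0;2;0];[::2;0;0;2];[::2;1;2]];[::[::0;2;0;0];[::1;0;0;1;1];[::0;1;0;0]];[::[::0;1;0;1;0;1;2];[::1;0;0;1;1];[::0;1;0;0]]];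
 [::[::[::2];[::0;0;1;2;1;2;1];[::0;0;1;0]];[::[::1;1;2;1];[::2;0;0;2];[::0;0;1;0]];[::[::2;0;2;0;0;2];[::0;0;1;1;2;1;2];[::2;1;2]];[::[::0;0;2;0];[::2;0;0;2];[::0;0;1;0]];[::[::0;2;0;0];[::0;0;1;1;2;1;2];[::2;1;2]];[::[::0;0;1;0;1;2;1];[::0;0;1;2;1;2;1];[::0;0;1;0]]];
 [::[::[::2];[::1;0;0;1;1];[::1;1]];[::[::1;2;1;1];[::2;0;0;2];[::1;1]];[::[::1;1;2;1];[::1;0;0;1;1];[::1;1]];[::[::0;0;2;0];[::2;0;0;2];[::1;1]];[::[::0;2;0;0];[::1;0;0;1;1];[::1;1]];[::[::0;0;1;0;1;2;1];[::1;0;0;1;1];[::1;1]]];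
 [::[::[::2];[::0;0;1;2;1;2;1];[::2;1;1;2]];[::[::2;0;0;2;0;2];[::2;0;0;2];[::0;0;2;0;2;1;1]];[::[::2;0;2;0;0;2];[::0;0;2;0;0;2;0];[::0;0;1;2;0;2;1]];[::[::0;0;2;0];[::2;0;0;2];[::0;0;2;0;2;1;1]];[::[::0;2;0;0];[::0;0;2;0;0;2;0];[::0;0;1;2;0;2;1]];[::[::0;0;1;2;1;2;0;2;1];[::0;0;1;2;1;2;1];[::2;1;1;2]]];
 [::[::[::2];[::1;1;0;0;1];[::0;1;1;0;0]];[::[::2;0;0;2;0;2];[::2;0;0;2];[::2;1;1;2]];[::[::1;1;2;1];[::1;1;0;0;1];[::0;1;1;0;0]];[::[::0;0;2;0];[::2;0;0;2];[::2;1;1;2]];[::[::0;2;0;0];[::1;1;0;0;1];[::0;1;1;0;0]];[::[::0;1;0;0;1;2;1];[::1;1;0;0;1];[::0;1;1;0;0]]];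
 [::[::[::2];[::0;1;1;0;2;1;2];[::0;0;1;1;0]];[::[::1;2;1;1];[::2;0;0;2];[::0;0;1;1;0]];[::[::2;0;2;0;0;2];[::0;0;1;2;1;1;2];[::2;1;1;2]];[::[::0;0;2;0];[::2;0;0;2];[::0;0;1;1;0]];[::[::0;2;0;0];[::0;0;1;2;1;1;2];[::2;1;1;2]];[::[::0;0;1;1;2;1;0];[::0;1;1;0;2;1;2];[::0;0;1;1;0]]]];
[::[::[::[::2];[::0;0;2;0;0;2;0];[::1]];[::[::0;0;2;0];[::0;2;0;0;2;0;0];[::1]];[::[::0;2;0;0];[::2;0;0;2];[::1]];[::[::2;0;0;2;0;2];[::0;2;0;0;2;0;0];[::1]];[::[::2;0;2;0;0;2];[::2;0;0;2];[::1]];[::[::0;0;2;0;2;0;0;2;0];[::0;0;2;0;0;2;0];[::1]]];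
 [::[::[::2];[::1;0;0;1;1];[::2;1;2]];[::[::0;0;2;0];[::1;0;0;1;1];[::1;1;2;1;2;1]];[::[::0;2;0;0];[::2;0;0;2];[::1;0;2;0;0;2]];[::[::1;1;2;1];[::1;0;0;1;1];[::1;1;2;1;2;1]];[::[::1;2;1;1];[::2;0;0;2];[::1;0;2;0;0;2]];[::[::0;0;1;2;1;1;0];[::1;0;0;1;1];[::2;1;2]]];
 [::[::[::2];[::1;1;0;0;1];[::1;0;2;0;0;2]];[::[::0;0;2;0];[::1;1;0;0;1];[::2;1;2]];[::[::0;2;0;0];[::2;0;0;2];[::1;1;2;1;2;1]];[::[::1;1;2;1];[::1;1;0;0;1];[::2;1;2]];[::[::2;0;2;0;0;2];[::2;0;0;2];[::1;1;2;1;2;1]];[::[::0;0;1;0;1;2;1];[::1;1;0;0;1];[::1;0;2;0;0;2]]];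
 [::[::[::2];[::0;0;1;1;2;1;2];[::1;1;2;1;2;1]];[::[::0;0;2;0];[::0;0;1;2;1;2;1];[::1;0;2;0;0;2]];[::[::0;2;0;0];[::2;0;0;2];[::2;1;2]];[::[::2;0;0;2;0;2];[::0;0;1;2;1;2;1];[::1;0;2;0;0;2]];[::[::1;2;1;1];[::2;0;0;2];[::2;1;2]];[::[::0;1;0;1;0;1;2];[::0;0;1;1;2;1;2];[::1;1;2;1;2;1]]];
 [::[::[::2];[::0;0;2;0;0;2;0];[::1;1]];[::[::0;0;2;0];[::0;0;1;2;1;2;1];[::1;1]];[::[::0;2;0;0];[::2;0;0;2];[::1;1]];[::[::2;0;0;2;0;2];[::0;0;1;2;1;2;1];[::1;1]];[::[::2;0;2;0;0;2];[::2;0;0;2];[::1;1]];[::[::0;0;1;2;1;2;0;2;1];[::0;0;2;0;0;2;0];[::1;1]]];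
 [::[::[::2];[::1;1;0;0;1];[::2;1;1;2]];[::[::0;0;2;0];[::1;1;0;0;1];[::0;0;1;2;0;1;2]];[::[::0;2;0;0];[::2;0;0;2];[::0;0;2;1;0;2;1]];[::[::1;2;1;1];[::1;1;0;0;1];[::0;0;1;2;0;1;2]];[::[::1;1;2;1];[::2;0;0;2];[::0;0;2;1;0;2;1]];[::[::0;0;1;0;1;2;1];[::1;1;0;0;1];[::2;1;1;2]]];
 [::[::[::2];[::1;0;0;1;1];[::0;0;2;1;0;2;1]];[::[::0;0;2;0];[::1;0;0;1;1];[::2;1;1;2]];[::[::0;2;0;0];[::2;0;0;2];[::0;0;1;2;0;1;2]];[::[::1;2;1;1];[::1;0;0;1;1];[::2;1;1;2]];[::[::2;0;2;0;0;2];[::2;0;0;2];[::0;0;1;2;0;1;2]];[::[::0;0;1;1;2;1;0];[::1;0;0;1;1];[::0;0;2;1;0;2;1]]];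
 [::[::[::2];[::0;0;1;2;1;1;2];[::0;0;1;2;0;1;2]];[::[::0;0;2;0];[::0;1;1;0;2;1;2];[::0;0;2;1;0;2;1]];[::[::0;2;0;0];[::2;0;0;2];[::2;1;1;2]];[::[::2;0;0;2;0;2];[::0;1;1;0;2;1;2];[::0;0;2;1;0;2;1]];[::[::1;1;2;1];[::2;0;0;2];[::2;1;1;2]];[::[::0;1;0;0;1;2;1];[::0;0;1;2;1;1;2];[::0;0;1;2;0;1;2]]]]].

Lemma chk_closed : all (fun x => all (fun g => mmul x g \in Llit) [:: s'; t'; u']) Llit.
Proof. vm_compute. reflexivity. Qed.
Lemma chk_I : I' \in Llit. Proof. vm_compute. reflexivity. Qed.
Lemma chk_exp : all (fun x => mpow 12 x == I') (Llit ++ C1lit ++ C2lit ++ CSlit).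
Proof. vm_compute. reflexivity. Qed.
Definition cls_ok (g : Mat) (C : seq Mat) :=
  all (fun x => mmul (mmul (mpow 11 x) g) x \in C) Llit && all (fun c => mpow 11 c \in C) C.
Lemma chk_c1 : cls_ok t' C1lit. Proof. vm_compute. reflexivity. Qed.
Lemma chk_c2 : cls_ok u' C2lit. Proof. vm_compute. reflexivity. Qed.
Lemma chk_cs : cls_ok s' CSlit. Proof. vm_compute. reflexivity. Qed.
Definition tab_ok :=
  all (fun i => all (fun j => all (fun k =>
    let a := nth I' C1lit i in let b := nth I' C2lit j in let c := nth I' CSlit k in
    let ws := nth [::] (nth [::] (nth [::] tab i) j) k in
    [&& evalw a b c (nth [::] ws 0) == s', evalw a b c (nth [::] ws 1) == t'
      & evalw a b c (nth [::] ws 2) == u']) (iota 0 (size CSlit))) (iota 0 (size C2lit))) (iota 0 (size C1lit)).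
Lemma chk_tab : tab_ok. Proof. vm_compute. reflexivity. Qed.

Definition PL (h : M2) := forall g, g \in Llit -> exists2 g', g' \in Llit & eM g * h = eM g'.

Lemma PL1 : PL 1. Proof. by move=> g gL; exists g; rewrite ?mulr1. Qed.
Lemma PLM {x y} : PL x -> PL y -> PL (x * y).
Proof.
move=> Px Py g gL; have [g1 g1L e1] := Px g gL; have [g2 g2L e2] := Py g1 g1L.
by exists g2 => //; rewrite mulrA e1 e2.
Qed.
Lemma PLX {x} n : PL x -> PL (x ^+ n).
Proof. move=> Px; elim: n => [|n IH]; first by rewrite expr0; apply: PL1. by rewrite exprSr; apply: PLM. Qed.

Lemma PL_gen g : g \in [:: s'; t'; u'] -> PL (eM g).
Proof.
move=> gg x xL; exists (mmul x g); last by rewrite eMM.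
by have := allP chk_closed x xL => /allP; apply.
Qed.

Lemma PL_in {h} : PL h -> exists2 g, g \in Llit & h = eM g.
Proof. move=> P; have [g gL e] := P I' chk_I; by exists g; rewrite // -e eM1 mul1r. Qed.

Lemma mem_exp {g} : g \in Llit -> mpow 12 g == I'.
Proof. by move=> gL; apply: (allP chk_exp); rewrite mem_cat gL. Qed.

Lemma G7_PL {h} : G7 h -> PL h.
Proof.
elim=> [|x [->|[->|->]]|x y _ Px _ Py|x _ Px].
- exact: PL1.
- by rewrite -eMs; apply: PL_gen; rewrite !inE eqxx.
- by rewrite -eMt; apply: PL_gen; rewrite !inE eqxx ?orbT.
- by rewrite -eMu; apply: PL_gen; rewrite !inE eqxx ?orbT.
- exact: PLM.
- have [g gL e] := PL_in Px.
  by rewrite e (eM_inv (mem_exp gL)) eM_pow -e; apply: PLX.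
Qed.

Lemma cls_L {g C} : cls_ok g C -> (forall c, c \in C -> mpow 12 c == I') ->
  forall x, cls7 (eM g) x \/ inv_set (cls7 (eM g)) x -> exists2 c, c \in C & x = eM c.
Proof.
move=> /andP[H1 H2] HC x.
have main : forall y, cls7 (eM g) y -> exists2 c, c \in C & y = eM c.
  move=> y [h Gh ->]; have [z zL ->] := PL_in (G7_PL Gh).
  exists (mmul (mmul (mpow 11 z) g) z); first exact: (allP H1).
  by rewrite (eM_inv (mem_exp zL)) !eMM.
case=> [/main//|/main [c cC e]].
exists (mpow 11 c); first exact: (allP H2).
by rewrite -[x]invrK e (eM_inv (HC c cC)).
Qed.

Lemma evalw_gen (X : M2 -> Prop) a b c w : gen X (eM a) -> gen X (eM b) -> gen X (eM c) ->
  gen X (eM (evalw a b c w)).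
Proof.
move=> ga gb gc; rewrite /evalw.
have : gen X (eM I') by rewrite eM1; apply: gen1.
elim: w I' => [|k w IH] acc //= gacc; apply: IH; rewrite eMM; apply: genM => //.
by case: k => [|[|[|k]]] //=; rewrite nth_nil.
Qed.

Lemma tab_words a b c : a \in C1lit -> b \in C2lit -> c \in CSlit ->
  exists ws, [/\ evalw a b c (nth [::] ws 0) = s', evalw a b c (nth [::] ws 1) = t'
      & evalw a b c (nth [::] ws 2) = u'].
Proof.
move=> aC bC cC.
have := allP chk_tab (index a C1lit); rewrite mem_iota add0n index_mem => /(_ aC) /allP.
move=> /(_ (index b C2lit)); rewrite mem_iota add0n index_mem => /(_ bC) /allP.
move=> /(_ (index c CSlit)); rewrite mem_iota add0n index_mem => /(_ cC).
rewrite !nth_index // => /and3P[/eqP e1 /eqP e2 /eqP e3].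
by eexists; split; [exact: e1 | exact: e2 | exact: e3].
Qed.

Lemma expC1 c : c \in C1lit -> mpow 12 c == I'.
Proof. by move=> h; apply: (allP chk_exp); rewrite !mem_cat h ?orbT. Qed.
Lemma expC2 c : c \in C2lit -> mpow 12 c == I'.
Proof. by move=> h; apply: (allP chk_exp); rewrite !mem_cat h ?orbT. Qed.
Lemma expCS c : c \in CSlit -> mpow 12 c == I'.
Proof. by move=> h; apply: (allP chk_exp); rewrite !mem_cat h ?orbT. Qed.

Theorem proposition3p15 (X : 'M[algC]_2 -> Prop) :
  (forall x, X x -> G7 x /\ is_reflection x) ->
  (exists2 x, X x & (R1 x \/ inv_set R1 x)) ->
  (exists2 x, X x & (R2 x \/ inv_set R2 x)) ->
  (exists2 x, X x & S7 x) ->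
  forall g, gen X g <-> G7 g.
Proof.
move=> HX [x1 X1 c1] [x2 X2 c2] [x3 X3 c3] g; split.
  elim=> [|x /HX[]//|x y _ gx _ gy|x _ gx].
  - exact: gen1.
  - exact: genM.
  - exact: genV.
rewrite /R1 -eMt in c1; rewrite /R2 -eMu in c2; rewrite /S7 -eMs in c3.
have [a aC ea] := cls_L chk_c1 expC1 x1 c1.
have [b bC eb] := cls_L chk_c2 expC2 x2 c2.
have [c cC ec] := cls_L chk_cs expCS x3 (or_introl c3).
have ga : gen X (eM a) by rewrite -ea; apply: gen_in.
have gb : gen X (eM b) by rewrite -eb; apply: gen_in.
have gc : gen X (eM c) by rewrite -ec; apply: gen_in.
have [ws [e1 e2 e3]] := tab_words _ _ _ aC bC cC.
have gs : gen X s7 by rewrite -eMs -e1; apply: evalw_gen.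
have gt : gen X t7 by rewrite -eMt -e2; apply: evalw_gen.
have gu : gen X u7 by rewrite -eMu -e3; apply: evalw_gen.
elim=> [|x [->|[->|->]]|x y _ gx _ gy|x _ gx] //.
- exact: gen1.
- exact: genM.
- exact: genV.
Qed.
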